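(* Let $\nu\in\mathbb{R}$, $n\ge 1$, and let $p_n(\underline{\theta})$ be any function of $\underline{\theta}=(\theta_1,\dots,\theta_n)$ that does not depend on $\underline{l}=(l_1,\dots,l_n)\in\{0,1\}^n$. Then $$K_n(\underline{\theta})=\sum_{l_1=0}^1\cdots\sum_{l_n=0}^1(-1)^{l_1+\dots+l_n}\prod_{1\le i<j\le n}\Big(1+(l_i-l_j)\frac{i\sin\pi\nu}{\sinh\theta_{ij}}\Big)p_n(\underline{\theta})$$ vanishes identically.
   Context: $\theta_{ij}=\theta_i-\theta_j$. *)

(* Defs.v *)
From Stdlib Require Import Reals.
From mathcomp Require Import all_boot all_order all_algebra.
From mathcomp Require Import Rstruct.
From mathcomp.real_closed Require Import complex.
Import GRing.Theory Num.Theory.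

Definition theta_ij (n : nat) (theta : 'I_n -> R) (i j : 'I_n) : R :=
  Rminus (theta i) (theta j).
Arguments theta_ij {n} theta i j.

(* Main.v *)
Require Import Defs.
From Stdlib Require Import Reals Lra.
From mathcomp Require Import all_boot all_order all_algebra.
From mathcomp Require Import Rstruct.
From mathcomp.real_closed Require Import complex.
Import GRing.Theory Num.Theory.
Set Implicit Arguments. Unset Strict Implicit. Unset Printing Implicit Defensive.

Lemma sinh_e (u v : R) :
  Rmult (sinh (Rminus u v)) (Rplus (Rmult (exp u) (exp v)) (Rmult (exp u) (exp v)))
  = Rminus (Rmult (exp u) (exp u)) (Rmult (exp v) (exp v)).
Proof.
have hu := exp_pos u; have hv := exp_pos v.
have e1 : exp (u - v) = Rdiv (exp u) (exp v).
  by unfold Rminus, Rdiv; rewrite exp_plus exp_Ropp.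
have e2 : exp (- (u - v)) = Rdiv (exp v) (exp u).
  by rewrite Ropp_minus_distr; unfold Rminus, Rdiv; rewrite exp_plus exp_Ropp.
unfold sinh; rewrite e1 e2.
field; lra.
Qed.

Lemma sq_ne (u v : R) : u <> v ->
  Rminus (Rmult (exp u) (exp u)) (Rmult (exp v) (exp v)) <> 0%R.
Proof.
move=> uv e; apply: uv; apply: exp_inv.
have hu := exp_pos u; have hv := exp_pos v.
have h : Rmult (Rminus (exp u) (exp v)) (Rplus (exp u) (exp v)) = 0%R.
  by rewrite -e; ring.
case: (Rmult_integral _ _ h) => h'; lra.
Qed.

From mathcomp Require Import zify ring.
Local Open Scope ring_scope.
Definition cc (F : fieldType) (T : finType) (a : F) (x : T -> F) (i j : T) : F :=
  (a *+ 2) * x i * x j / (x i ^+ 2 - x j ^+ 2).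
Definition hW (F : fieldType) (T : finType) (a : F) (x : T -> F) (S : {set T}) (i j : T) : F :=
  if (i \in S) && (j \notin S) then 1 + cc a x i j else 1.
Definition WW (F : fieldType) (T : finType) (a : F) (x : T -> F) (A S : {set T}) : F :=
  \prod_(i in A) \prod_(j in A) hW a x S i j.
Definition KK (F : fieldType) (T : finType) (a : F) (x : T -> F) (A : {set T}) : F :=
  \sum_(S : {set T} | S \subset A) (-1) ^+ #|S| * WW a x A S.

Lemma sum_split (F : fieldType) (T : finType) (A : {set T}) (m : T) (f : {set T} -> F) :
  m \in A ->
  \sum_(S : {set T} | S \subset A) f S =
  \sum_(S : {set T} | S \subset A :\ m) (f S + f (m |: S)).
Proof.
move=> mA; rewrite big_split /= (bigID (fun S : {set T} => m \in S)) /= addrC.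
congr (_ + _).
  by apply: eq_bigl => S; rewrite subsetD1.
rewrite (reindex_onto (fun S => m |: S) (fun S => S :\ m)) /=; last first.
  by move=> S /andP[_ mS]; rewrite setD1K.
apply: eq_bigl => S; rewrite setU11 ?andbT subUset sub1set mA /=.
rewrite subsetD1. case mS: (m \in S). all: rewrite ?andbF //=.
  case: eqP; rewrite ?andbF // => E.
  by have := setD11 m (m |: S); rewrite E mS.
by rewrite setU1K ?mS // eqxx.
Qed.

Lemma Wsplit0 (F : fieldType) (T : finType) (a : F) (x : T -> F) (A S : {set T}) (m : T) :
  m \in A -> S \subset A :\ m ->
  WW a x A S = WW a x (A :\ m) S *
     \prod_(i in A :\ m) (if i \in S then 1 + cc a x i m else 1).
Proof.
move=> mA; rewrite subsetD1 => /andP[_ mnS].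
rewrite /WW (big_setD1 m mA) /= big1 ?mul1r => [|j _]; last by rewrite /hW (negbTE mnS).
rewrite -big_split; apply: eq_bigr => i iB.
by rewrite (big_setD1 m mA) /= mulrC /hW mnS andbT.
Qed.

Lemma Wsplit1 (F : fieldType) (T : finType) (a : F) (x : T -> F) (A S : {set T}) (m : T) :
  m \in A -> S \subset A :\ m ->
  WW a x A (m |: S) = WW a x (A :\ m) S *
     \prod_(j in A :\ m) (if j \in S then 1 else 1 + cc a x m j).
Proof.
move=> mA; rewrite subsetD1 => /andP[_ mnS].
rewrite /WW (big_setD1 m mA) /= mulrC; congr (_ * _).
  apply: eq_bigr => i iB; rewrite (big_setD1 m mA) /=.
  rewrite {1}/hW setU11 andbF mul1r; apply: eq_bigr => j jB.
  move: iB jB; rewrite !in_setD1 => /andP[im _] /andP[jm _].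
  by rewrite /hW !in_setU1 (negbTE im) (negbTE jm).
rewrite (big_setD1 m mA) /= {1}/hW setU11 andbF mul1r.
apply: eq_bigr => j; rewrite in_setD1 => /andP[jm _].
by rewrite /hW setU11 in_setU1 (negbTE jm) /=; case: (j \in S).
Qed.

Definition uu (F : fieldType) (T : finType) (x : T -> F) (k : T) : {poly F} :=
  (x k ^+ 2)%:P - 'X^2.

Lemma size_uu (F : fieldType) (T : finType) (x : T -> F) k : (size (uu x k) <= 3)%N.
Proof.
rewrite /uu (leq_trans (size_polyD _ _)) // geq_max size_polyN size_polyXn andbT.
by rewrite (leq_trans (size_polyC_leq1 _)).
Qed.

Lemma size_prod_uu (F : fieldType) (T : finType) (x : T -> F) (s : seq T) :
  (size (\prod_(k <- s) uu x k)%R <= (2 * size s).+1)%N.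
Proof.
elim: s => [|k s IH]; first by rewrite big_nil size_poly1.
rewrite big_cons (leq_trans (size_polyMleq _ _)) //.
move: (size_uu x k) IH => /=; lia.
Qed.

Lemma size_bX (F : fieldType) (b : F) : (size (b *: 'X : {poly F}) <= 2)%N.
Proof. by rewrite (leq_trans (size_scale_leq _ _)) // size_polyX. Qed.

Lemma size_prod_diff (F : fieldType) (T : finType) (x : T -> F) (b : T -> F) (s : seq T) :
  (size (\prod_(k <- s) (uu x k + b k *: 'X) - \prod_(k <- s) uu x k)%R <= 2 * size s)%N.
Proof.
elim: s => [|k s IH]; first by rewrite !big_nil subrr size_poly0.
rewrite !big_cons; move: IH (size_prod_uu x s).
set P := (\prod_(j <- s) _)%R; set U := (\prod_(j <- s) _)%R => IH hU.
set u := uu x k; set v := b k *: 'X.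
have -> : (u + v) * P - u * U = u * (P - U) + v * (P - U) + v * U by ring.
have hu := size_uu x k; have hv := size_bX (b k).
fold u in hu; fold v in hv.
apply: leq_trans (size_polyD _ _) _; rewrite geq_max; apply/andP; split.
  apply: leq_trans (size_polyD _ _) _; rewrite geq_max; apply/andP; split.
    by apply: leq_trans (size_polyMleq _ _) _; move: hu IH => /=; lia.
  by apply: leq_trans (size_polyMleq _ _) _; move: hv IH => /=; lia.
by apply: leq_trans (size_polyMleq _ _) _; move: hv hU => /=; lia.
Qed.

Definition gam (F : fieldType) (T : finType) (a : F) (x : T -> F) (k : T) : F := a *+ 2 * x k.
Definition Q0 (F : fieldType) (T : finType) (a : F) (x : T -> F) (B S : {set T}) : {poly F} :=
  \prod_(k in B) (uu x k + (if k \in S then gam a x k else 0) *: 'X).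
Definition Q1 (F : fieldType) (T : finType) (a : F) (x : T -> F) (B S : {set T}) : {poly F} :=
  \prod_(k in B) (uu x k + (if k \in S then 0 else - gam a x k) *: 'X).
Definition NN (F : fieldType) (T : finType) (a : F) (x : T -> F) (B : {set T}) : {poly F} :=
  \sum_(S : {set T} | S \subset B) ((-1) ^+ #|S| * WW a x B S) *: (Q0 a x B S - Q1 a x B S).

Lemma size_NN (F : fieldType) (T : finType) (a : F) (x : T -> F) (B : {set T}) :
  (size (NN a x B) <= 2 * #|B|)%N.
Proof.
rewrite /NN; apply: (big_ind (fun p : {poly F} => size p <= 2 * #|B|)%N).
- by rewrite size_poly0.
- by move=> p q hp hq; apply: leq_trans (size_polyD _ _) _; rewrite geq_max hp hq.
move=> S _; apply: leq_trans (size_scale_leq _ _) _.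
have -> : Q0 a x B S - Q1 a x B S =
   (Q0 a x B S - \prod_(k in B) uu x k) - (Q1 a x B S - \prod_(k in B) uu x k) by ring.
apply: leq_trans (size_polyD _ _) _; rewrite geq_max size_polyN.
by rewrite /Q0 /Q1 -!big_enum cardE !size_prod_diff.
Qed.

Lemma ev_lin (F : fieldType) (T : finType) (x : T -> F) (k : T) (c y : F) :
  (uu x k + c *: 'X).[y] = x k ^+ 2 - y ^+ 2 + c * y.
Proof. by rewrite /uu !hornerE. Qed.

Lemma fac0 (F : fieldType) (T : finType) (a : F) (x : T -> F) (k m : T) :
  x k ^+ 2 - x m ^+ 2 != 0 ->
  x k ^+ 2 - x m ^+ 2 + gam a x k * x m = (x k ^+ 2 - x m ^+ 2) * (1 + cc a x k m).
Proof. by move=> h; rewrite /cc /gam; field. Qed.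

Lemma fac1 (F : fieldType) (T : finType) (a : F) (x : T -> F) (k m : T) :
  x k ^+ 2 - x m ^+ 2 != 0 ->
  x k ^+ 2 - x m ^+ 2 + - gam a x k * x m = (x k ^+ 2 - x m ^+ 2) * (1 + cc a x m k).
Proof.
move=> h; have h' : x m ^+ 2 - x k ^+ 2 != 0 by rewrite -opprB oppr_eq0.
by rewrite /cc /gam; field.
Qed.

Lemma Q0_m (F : fieldType) (T : finType) (a : F) (x : T -> F) (B S : {set T}) (m : T) :
  (forall i j, i != j -> x i ^+ 2 - x j ^+ 2 != 0) -> m \notin B ->
  (Q0 a x B S).[x m] = (\prod_(k in B) (x k ^+ 2 - x m ^+ 2)) *
     \prod_(k in B) (if k \in S then 1 + cc a x k m else 1).
Proof.
move=> hx mB; rewrite /Q0 horner_prod -big_split; apply: eq_bigr => k kB.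
have km : k != m by apply: contraNneq mB => <-.
by rewrite ev_lin; case: (k \in S); rewrite /= ?fac0 ?hx // mul0r addr0 mulr1.
Qed.

Lemma Q1_m (F : fieldType) (T : finType) (a : F) (x : T -> F) (B S : {set T}) (m : T) :
  (forall i j, i != j -> x i ^+ 2 - x j ^+ 2 != 0) -> m \notin B ->
  (Q1 a x B S).[x m] = (\prod_(k in B) (x k ^+ 2 - x m ^+ 2)) *
     \prod_(k in B) (if k \in S then 1 else 1 + cc a x m k).
Proof.
move=> hx mB; rewrite /Q1 horner_prod -big_split; apply: eq_bigr => k kB.
have km : k != m by apply: contraNneq mB => <-.
by rewrite ev_lin; case: (k \in S); rewrite /= ?fac1 ?hx // mul0r addr0 mulr1.
Qed.

Lemma NN_m (F : fieldType) (T : finType) (a : F) (x : T -> F) (A : {set T}) (m : T) :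
  (forall i j, i != j -> x i ^+ 2 - x j ^+ 2 != 0) -> m \in A ->
  (NN a x (A :\ m)).[x m] = (\prod_(k in A :\ m) (x k ^+ 2 - x m ^+ 2)) * KK a x A.
Proof.
move=> hx mA; have mB : m \notin A :\ m by rewrite setD11.
rewrite /KK (@sum_split _ _ A m) // /NN horner_sum big_distrr; apply: eq_bigr => S hS.
rewrite hornerZ hornerD hornerN Q0_m // Q1_m // (Wsplit0 _ _ mA) // (Wsplit1 _ _ mA) //.
move: hS; rewrite subsetD1 => /andP[_ mS].
rewrite cardsU1 mS /= add1n [(-1) ^+ _.+1]exprS; ring.
Qed.

Lemma NN_root_split (F : fieldType) (T : finType) (a : F) (x : T -> F) (B : {set T}) (j : T) (y : F) :
  j \in B -> y ^+ 2 = x j ^+ 2 ->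
  (NN a x B).[y] = \sum_(S : {set T} | S \subset B :\ j)
     (-1) ^+ #|S| * WW a x (B :\ j) S * (gam a x j * y) *
     (\prod_(k in B :\ j) ((if k \in S then 1 + cc a x k j else 1) *
                          (x k ^+ 2 - x j ^+ 2 + (if k \in S then 0 else - gam a x k) * y)) -
      \prod_(k in B :\ j) ((if k \in S then 1 else 1 + cc a x j k) *
                          (x k ^+ 2 - x j ^+ 2 + (if k \in S then gam a x k else 0) * y))).
Proof.
move=> jB hy; rewrite /NN horner_sum (@sum_split _ _ B j) //; apply: eq_bigr => S hS.
move: (hS); rewrite subsetD1 => /andP[_ jS].
rewrite !hornerZ !hornerD !hornerN /Q0 /Q1 !horner_prod.
rewrite !(big_setD1 j jB) /= !ev_lin hy subrr !add0r setU11 (negbTE jS) /=.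
rewrite (Wsplit0 _ _ jB) // (Wsplit1 _ _ jB) // cardsU1 jS /= add1n [(-1) ^+ _.+1]exprS.
have e1 : \prod_(i in B :\ j) (uu x i + (if i \in j |: S then gam a x i else 0) *: 'X).[y]
   = \prod_(i in B :\ j) (x i ^+ 2 - x j ^+ 2 + (if i \in S then gam a x i else 0) * y).
  apply: eq_bigr => i; rewrite in_setD1 in_setU1 => /andP[/negbTE -> _] /=.
  by rewrite ev_lin hy.
have e2 : \prod_(i in B :\ j) (uu x i + (if i \in S then 0 else - gam a x i) *: 'X).[y]
   = \prod_(i in B :\ j) (x i ^+ 2 - x j ^+ 2 + (if i \in S then 0 else - gam a x i) * y).
  by apply: eq_bigr => i _; rewrite ev_lin hy.
rewrite e1 e2 !big_split /=; ring.
Qed.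

Lemma NN_root_plus (F : fieldType) (T : finType) (a : F) (x : T -> F) (B : {set T}) (j : T) :
  (forall i j, i != j -> x i ^+ 2 - x j ^+ 2 != 0) -> j \in B ->
  (NN a x B).[x j] = 0.
Proof.
move=> hx jB; rewrite (@NN_root_split _ _ a x B j (x j) jB) //; apply: big1 => S _.
apply/eqP; rewrite mulf_eq0 subr_eq0; apply/orP; right; apply/eqP.
apply: eq_bigr => k; rewrite in_setD1 => /andP[kj _].
case: (k \in S) => /=.
  by rewrite mul0r addr0 mul1r fac0 ?hx // mulrC.
by rewrite mul0r addr0 mul1r fac1 ?hx // mulrC.
Qed.

Lemma NN_root_minus (F : fieldType) (T : finType) (a : F) (x : T -> F) (B : {set T}) (j : T) :
  (forall i j, i != j -> x i ^+ 2 - x j ^+ 2 != 0) -> j \in B ->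
  (B :\ j != set0 -> KK a x (B :\ j) = 0) ->
  (NN a x B).[- x j] = 0.
Proof.
move=> hx jB IH; rewrite (@NN_root_split _ _ a x B j (- x j) jB) ?sqrrN //.
set Cp := \prod_(k in B :\ j) (x k ^+ 2 - x j ^+ 2 + gam a x k * x j).
set Cm := \prod_(k in B :\ j) (x k ^+ 2 - x j ^+ 2 + - gam a x k * x j).
rewrite (eq_bigr (fun S : {set T} => (-1) ^+ #|S| * WW a x (B :\ j) S * (gam a x j * - x j * (Cp - Cm)))); last first.
  move=> S _; rewrite -mulrA; congr (_ * (_ * _)); congr (_ - _); apply: eq_bigr => k;
    rewrite in_setD1 => /andP[kj _]; case: (k \in S) => /=.
  - by rewrite mul0r addr0 mulrC -fac0 ?hx.
  - by rewrite mul1r mulrNN.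
  - by rewrite mul1r mulrN mulNr.
  - by rewrite mul0r addr0 mulrC -fac1 ?hx.
rewrite -big_distrl /= -/(KK a x (B :\ j)).
rewrite /Cp /Cm; have [->|ne] := eqVneq (B :\ j) set0.
  by rewrite !big_set0 subrr !mulr0.
by rewrite IH // mul0r.
Qed.

Lemma KK0 (F : fieldType) (T : finType) (a : F) (x : T -> F) :
  (forall i j, i != j -> x i ^+ 2 - x j ^+ 2 != 0) -> (forall i, x i + x i != 0) ->
  forall A : {set T}, A != set0 -> KK a x A = 0.
Proof.
move=> hx hx2.
suff H : forall n (A : {set T}), (#|A| <= n)%N -> A != set0 -> KK a x A = 0.
  by move=> A; apply: (H #|A|).
elim=> [|n IHn] A hA A0.
  by move: hA; rewrite leqn0 cards_eq0 (negbTE A0).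
case/set0Pn: A0 => m mA.
set B := A :\ m.
have hB : (#|B| <= n)%N by move: hA; rewrite (cardsD1 m A) mA.
have N0 : NN a x B = 0.
  apply/eqP; apply/negPn/negP => Nn0.
  set rs := [seq x k | k <- enum B] ++ [seq - x k | k <- enum B].
  have := @max_poly_roots _ _ rs Nn0.
  have hsz : size rs = (2 * #|B|)%N by rewrite size_cat !size_map -cardE; lia.
  have injx : forall k l, x k = x l -> k = l.
    move=> k l e; apply/eqP; apply: contraT => kl.
    by have := hx _ _ kl; rewrite e subrr eqxx.
  have negx : forall k l, x k <> - x l.
    move=> k l e; have [kl|kl] := eqVneq k l.
      by move: e (hx2 l); rewrite kl => e; rewrite {1}e addNr eqxx.
    by have := hx _ _ kl; rewrite e sqrrN subrr eqxx.
  have -> : all (root (NN a x B)) rs.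
    rewrite all_cat; apply/andP; split; apply/allP => z /mapP[k]; rewrite mem_enum => kB ->.
      by apply/rootP; apply: NN_root_plus.
    apply/rootP; apply: NN_root_minus => // ne.
    apply: (IHn _ _ ne); move: hB; rewrite (cardsD1 k B) kB; lia.
  have -> : uniq rs.
    rewrite cat_uniq !map_inj_in_uniq ?enum_uniq /=; last 2 first.
    - by move=> k l _ _ /oppr_inj; apply: injx.
    - by move=> k l _ _; apply: injx.
    rewrite andbT; apply/hasPn => z /mapP[k _ ->]; apply/mapP => [[l _ e]].
    by apply: (negx l k); rewrite -e.
  by move=> /(_ isT isT); rewrite hsz ltnNge size_NN.
have := NN_m a hx mA; rewrite -/B N0 horner0 => /esym /eqP.
rewrite mulf_eq0 => /orP[|/eqP //].
move=> /eqP P0; exfalso; move: P0; apply/eqP.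
apply: (big_ind (fun z : F => z != 0)) => //; first by rewrite oner_neq0.
  by move=> u v hu hv; rewrite mulf_neq0.
move=> k; rewrite in_setD1 => /andP[km _]; exact: hx.
Qed.

Local Open Scope complex_scope.

Definition hS (n : nat) (S : {set 'I_n}) : {ffun 'I_n -> 'I_2} :=
  [ffun k => if k \in S then ord_max else ord0].

Lemma hS_bij (n : nat) : bijective (@hS n).
Proof.
exists (fun l : {ffun 'I_n -> 'I_2} => [set k | l k != ord0]).
  move=> S; apply/setP => k; rewrite inE /hS ffunE.
  by case: (k \in S).
move=> l; apply/ffunP => k; rewrite /hS ffunE inE.
case: (l k) => [[|[|m]] hm] //=; apply: val_inj => //.
Qed.

Lemma prod_tri (F : fieldType) (n : nat) (S : {set 'I_n}) (a : F) (x : 'I_n -> F)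
    (c' : 'I_n -> 'I_n -> F) :
  (forall i j, i != j -> c' i j = cc a x i j) ->
  \prod_(i < n) \prod_(j < n | (i < j)%N)
     (1 + ((hS S i : nat)%:R - (hS S j : nat)%:R) * c' i j) = WW a x setT S.
Proof.
move=> hc.
have e : forall i, \prod_(j in [set: 'I_n]) hW a x S i j =
    \prod_(j < n | (i < j)%N) hW a x S i j * \prod_(j < n | (j < i)%N) hW a x S i j.
  move=> i; rewrite (eq_bigl (fun j => true)) => [|j]; last by rewrite in_setT.
  rewrite (bigID (fun j : 'I_n => (i < j)%N)) /=; congr (_ * _).
  rewrite big_mkcond [RHS]big_mkcond; apply: eq_bigr => j _.
  case: ltngtP => h //=.
  have -> : j = i by apply: val_inj.
  by rewrite /hW; case: (i \in S).
rewrite /WW (eq_bigl (fun i => true)) => [|i]; last by rewrite in_setT.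
rewrite (eq_bigr _ (fun i _ => e i)) big_split /=.
rewrite [X in _ = _ * X](exchange_big_dep xpredT) //= -big_split /=.
apply: eq_bigr => i _; rewrite -big_split /=; apply: eq_bigr => j ij.
have nij : i != j by rewrite neq_ltn ij.
rewrite hc // /hW !ffunE.
have ccN : cc a x j i = - cc a x i j.
  rewrite /cc -opprB invrN !mulrN; congr (- _); rewrite -!mulrA; congr (_ * _); rewrite mulrCA.
  done.
case: (i \in S); case: (j \in S) => /=; rewrite ?subrr ?mul0r ?mulr1 ?mul1r ?subr0 ?sub0r ?addr0 //.
all: by rewrite ?ccN; ring.
Qed.

Unset Implicit Arguments.

Theorem lemma1 (nu : R) (n : nat) (hn : (1 <= n)%N)
    (p_n : ('I_n -> R) -> R[i]) (theta : 'I_n -> R)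
    (hdist : forall i j : 'I_n, i != j -> theta i <> theta j) :
  \sum_(l : {ffun 'I_n -> 'I_2})
     (-1) ^+ (\sum_(k < n) (l k : nat))%N *
     (\prod_(i < n) \prod_(j < n | (i < j)%N)
        (1 + ((l i : nat)%:R - (l j : nat)%:R) *
             ('i * (sin (PI * nu))%:C / (sinh (theta_ij theta i j))%:C)))
     * p_n theta
  = 0.
Proof.
set a : R[i] := 'i * (sin (PI * nu))%:C.
pose x := fun k : 'I_n => (exp (theta k))%:C : R[i].
have hx : forall i j, i != j -> x i ^+ 2 - x j ^+ 2 != 0.
  move=> i j ij; rewrite /x -!rmorphXn -rmorphB /= fmorph_eq0 !expr2.
  by apply/eqP; exact: (sq_ne (hdist i j ij)).
have hx2 : forall i, x i + x i != 0.
  move=> i; rewrite /x -rmorphD /= fmorph_eq0; apply/eqP => e.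
  have := exp_pos (theta i).
  change (Rplus (exp (theta i)) (exp (theta i)) = IZR Z0) in e; lra.
have xn0 : forall i, x i != 0.
  by move=> i; rewrite /x fmorph_eq0; apply/eqP; exact: (Rgt_not_eq _ _ (exp_pos _)).
have hc : forall i j, i != j ->
    'i * (sin (PI * nu))%:C / (sinh (theta_ij theta i j))%:C = cc a x i j.
  move=> i j ij; have E := sinh_e (theta i) (theta j).
  have EC : (sinh (theta_ij theta i j))%:C * (x i * x j + x i * x j) = x i ^+ 2 - x j ^+ 2.
    rewrite /x -!rmorphM -rmorphD -rmorphM -!rmorphXn -rmorphB /= !expr2.
    by congr (_%:C); exact: E.
  have s0 : (sinh (theta_ij theta i j))%:C != 0.
    by apply: contraNneq (hx _ _ ij) => e0; rewrite -EC e0 mul0r.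
  have d0 : x i * x j + x i * x j != 0.
    by apply: contraNneq (hx _ _ ij) => e0; rewrite -EC e0 mulr0.
  rewrite /cc -EC /a; field.
  by apply/andP; split; [exact: d0 | exact: s0].
rewrite -big_distrl /=.
have A0 : [set: 'I_n] != set0 by apply/set0Pn; exists (Ordinal hn).
have K0 := KK0 a hx hx2 A0.
suff -> : \sum_(l : {ffun 'I_n -> 'I_2})
     (-1) ^+ (\sum_(k < n) (l k : nat))%N *
     (\prod_(i < n) \prod_(j < n | (i < j)%N)
        (1 + ((l i : nat)%:R - (l j : nat)%:R) *
             (a / (sinh (theta_ij theta i j))%:C))) = KK a x setT.
  by rewrite K0 mul0r.
rewrite /KK [RHS](eq_bigl (fun _ => true)) => [|S]; last by rewrite subsetT.
rewrite (reindex (@hS n) (onW_bij _ (hS_bij n))) /=.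
apply: eq_bigr => S _; congr (_ * _).
  congr ((-1) ^+ _).
  rewrite (bigID (fun k => k \in S)) /= [X in (_ + X)%N]big1 ?addn0; last first.
    by move=> k kS; rewrite ffunE (negbTE kS).
  rewrite (eq_bigr (fun _ => 1%N)) ?sum1_card // => k kS.
  by rewrite ffunE kS.
by apply: prod_tri => i j ij; rewrite -hc.
Qed.
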